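(* If $m\ge 38$ is even and $m=3t$ for some positive integer $t$, then $\lambda(L_m)<\lambda(Y_m)$.
   Context: $\lambda(\cdot)$ denotes the largest adjacency eigenvalue. For even $m$, $L_m$ is obtained from a 5-cycle $u_1u_2u_3u_4u_5$ by adding $\frac{m-6}{2}$ new vertices each adjacent exactly to $u_1$ and $u_3$, and one new vertex adjacent only to $u_1$ (equivalently, $SK_{2,\frac{m-2}{2}}$, i.e. $K_{2,\frac{m-2}{2}}$ with one edge subdivided, with a pendant edge attached at a vertex of maximum degree). When $\frac{m-3}{3}$ is a positive integer, $Y_m$ is obtained from $C_5$ by replacing one vertex by an independent set $I$ of $\frac{m-3}{3}$ vertices each adjacent to both neighbours of the replaced vertex, then adding a new vertex adjacent to all vertices of $I$. *)

(* Defs.v *)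
From mathcomp Require Import all_boot all_order all_algebra.
From mathcomp.real_closed Require Import polyrcf.
Set Implicit Arguments. Unset Strict Implicit. Unset Printing Implicit Defensive.
Import Order.TTheory GRing.Theory Num.Theory.
Local Open Scope ring_scope.

Definition adj_mx (R : nzRingType) (n : nat) (e : nat -> nat -> bool) : 'M[R]_n :=
  \matrix_(i < n, j < n) ((e i j || e j i) : nat)%:R.

(* Largest adjacency eigenvalue: the largest real root of the characteristic
   polynomial (rootsR lists the real roots in increasing order). *)
Definition lambda (R : rcfType) (n : nat) (A : 'M[R]_n) : R :=
  last 0 (rootsR (char_poly A)).

(* L_m : 5-cycle u1..u5 = vertices 0..4; a = (m-6)/2 vertices 5..4+a adjacent
   to u1 (=0) and u3 (=2); one pendant vertex 5+a adjacent to u1. *)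
Definition L_edge (m : nat) (i j : nat) : bool :=
  let a := (m - 6)./2 in
  [|| (i == 0%N) && (j == 1%N), (i == 1%N) && (j == 2%N), (i == 2%N) && (j == 3%N),
      (i == 3%N) && (j == 4%N), (i == 0%N) && (j == 4%N),
      ((i == 0%N) || (i == 2%N)) && (5 <= j < 5 + a)%N
    | (i == 0%N) && (j == 5 + a)%N].

Definition L_order (m : nat) : nat := ((m - 6)./2 + 6)%N.

Definition L_mx (R : rcfType) (m : nat) : 'M[R]_(L_order m) := @adj_mx R (L_order m) (L_edge m).

(* Y_m : C5 = u1..u5 with u1 replaced by an independent set I of k = (m-3)/3
   vertices adjacent to u2 and u5; u2,u3,u4,u5 = vertices 0..3, I = vertices
   4..3+k, and a new vertex 4+k adjacent to all of I. *)
Definition Y_edge (m : nat) (i j : nat) : bool :=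
  let k := ((m - 3) %/ 3)%N in
  [|| (i == 0%N) && (j == 1%N), (i == 1%N) && (j == 2%N), (i == 2%N) && (j == 3%N),
      ((i == 0%N) || (i == 3%N)) && (4 <= j < 4 + k)%N
    | (4 <= i < 4 + k)%N && (j == 4 + k)%N].

Definition Y_order (m : nat) : nat := ((m - 3) %/ 3 + 5)%N.

Definition Y_mx (R : rcfType) (m : nat) : 'M[R]_(Y_order m) := @adj_mx R (Y_order m) (Y_edge m).

(* Main.v *)
Require Import Defs.
From mathcomp Require Import all_boot all_order all_algebra.
From mathcomp.real_closed Require Import polyrcf.
From mathcomp Require Import zify ring lra.
Import Order.TTheory GRing.Theory Num.Theory.
Set Implicit Arguments. Unset Strict Implicit.
Local Open Scope ring_scope.

Section Gen.
Variable R : rcfType.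

Lemma last_ge (z : R) (s : seq R) : path <%R z s -> forall y, y \in z :: s -> y <= last z s.
Proof.
elim: s z => [|w s IH] z /=; first by move=> _ y; rewrite inE => /eqP ->.
move=> /andP[hzw hp] y; rewrite inE => /orP[/eqP ->|hy].
  apply: (le_trans (ltW hzw)); apply: IH => //; exact: mem_head.
exact: IH.
Qed.

Lemma lambda_ge n (A : 'M[R]_n) x : root (char_poly A) x -> x <= lambda A.
Proof.
move=> hr; rewrite /lambda.
have p0 : char_poly A != 0 by rewrite monic_neq0 // char_poly_monic.
have hx : x \in rootsR (char_poly A).
  by rewrite -(roots_on_rootsR p0) hr andbT.
move: hx (sorted_roots (- cauchy_bound (char_poly A)) (cauchy_bound (char_poly A)) (char_poly A)).
rewrite -/(rootsR _).
case: (rootsR _) => [|z s] //= hx hs.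
exact: last_ge.
Qed.

Lemma lambda_cases n (A : 'M[R]_n) : lambda A = 0 \/ root (char_poly A) (lambda A).
Proof.
rewrite /lambda.
have := mem_last 0 (rootsR (char_poly A)); rewrite inE => /orP[/eqP ->|h]; first by left.
right.
have p0 : char_poly A != 0 by rewrite monic_neq0 // char_poly_monic.
by move: h; rewrite -(roots_on_rootsR p0) => /andP[].
Qed.

Definition nv n (v : 'rV[R]_n) (i : nat) : R := if insub i is Some o then v 0 o else 0.
Lemma nvE n (v : 'rV[R]_n) (o : 'I_n) : nv v o = v 0 o.
Proof. by rewrite /nv valK. Qed.

Lemma colE n e (v : 'rV[R]_n) (j : 'I_n) :
  (v *m adj_mx R n e) 0 j = \sum_(0 <= i < n) nv v i * ((e i j || e j i) : nat)%:R.
Proof. rewrite mxE big_mkord; apply: eq_bigr => i _; by rewrite nvE mxE. Qed.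

Lemma sum_b1 (f : nat -> R) (b : nat -> bool) lo hi :
  (forall i, (lo <= i < hi)%N -> b i) ->
  \sum_(lo <= i < hi) f i * (b i : nat)%:R = \sum_(lo <= i < hi) f i.
Proof. by move=> h; apply: eq_big_nat => i /h ->; rewrite mulr1. Qed.

Lemma sum_b0 (f : nat -> R) (b : nat -> bool) lo hi :
  (forall i, (lo <= i < hi)%N -> b i = false) ->
  \sum_(lo <= i < hi) f i * (b i : nat)%:R = 0.
Proof. by move=> h; rewrite big1_seq // => i; rewrite mem_index_iota => /h ->; rewrite mulr0. Qed.

Lemma split6 (F : nat -> R) a :
  \sum_(0 <= i < a + 6) F i = F 0%N + F 1%N + F 2%N + F 3%N + F 4%N + \sum_(5 <= i < 5 + a) F i + F (5 + a)%N.
Proof.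
rewrite (big_cat_nat _ (n := 5)) ?(leq_addl) //; last by lia.
rewrite (big_cat_nat _ (n := 5 + a) (m := 5)) //; last by lia.
have -> : (a + 6 = (5 + a).+1)%N by lia.
have -> : \sum_(0 <= i < 5) F i = F 0%N + F 1%N + F 2%N + F 3%N + F 4%N.
  by rewrite !big_nat_recr //= big_geq // add0r.
by rewrite big_nat1 /= addrA.
Qed.

Lemma split5 (F : nat -> R) k :
  \sum_(0 <= i < k + 5) F i = F 0%N + F 1%N + F 2%N + F 3%N + \sum_(4 <= i < 4 + k) F i + F (4 + k)%N.
Proof.
rewrite (big_cat_nat _ (n := 4)) //; last by lia.
rewrite (big_cat_nat _ (n := 4 + k) (m := 4)) //; last by lia.
have -> : (k + 5 = (4 + k).+1)%N by lia.
have -> : \sum_(0 <= i < 4) F i = F 0%N + F 1%N + F 2%N + F 3%N.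
  by rewrite !big_nat_recr //= big_geq // add0r.
by rewrite big_nat1 /= addrA.
Qed.

Definition gL (A x : R) := x^+6 - (2*A+6) * x^+4 + (5*A+8) * x^+2 - 2*(A+1)*x - (A+1).

Lemma L_alg (A x V0 V1 V2 V3 V4 Vp S : R) : x != 0 -> gL A x != 0 ->
 x*V0 = V1+V4+Vp+S -> x*V1 = V0+V2 -> x*V2 = V1+V3+S -> x*V3 = V2+V4 -> x*V4 = V3+V0 ->
 x*Vp = V0 -> x*S = A*(V0+V2) ->
 V0 = 0 /\ V1 = 0 /\ V2 = 0 /\ V3 = 0 /\ V4 = 0 /\ Vp = 0 /\ S = 0.
Proof.
move=> x0 g0 e0 e1 e2 e3 e4 ep eS.
have l0 : x*V0 - (V1+V4+Vp+S) = 0 by rewrite e0 subrr.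
have l1 : x*V1 - (V0+V2) = 0 by rewrite e1 subrr.
have l2 : x*V2 - (V1+V3+S) = 0 by rewrite e2 subrr.
have l3 : x*V3 - (V2+V4) = 0 by rewrite e3 subrr.
have l4 : x*V4 - (V3+V0) = 0 by rewrite e4 subrr.
have lp : x*Vp - V0 = 0 by rewrite ep subrr.
have lS : x*S - A*(V0+V2) = 0 by rewrite eS subrr.
have c0 : x * gL A x * V0 = (1%:R * x^+6 - 1%:R * x^+4 * A^+1 - 3%:R * x^+4 + 1%:R * x^+2 * A^+1 + 1%:R * x^+2) * (x*V0 - (V1+V4+Vp+S)) + (1%:R * x^+5 - 2%:R * x^+3 + 1%:R * x^+2) * (x*V1 - (V0+V2)) + (1%:R * x^+4 * A^+1 + 1%:R * x^+4 + 1%:R * x^+3 - 1%:R * x^+2 * A^+1 - 1%:R * x^+2) * (x*V2 - (V1+V3+S)) + (1%:R * x^+4 + 1%:R * x^+3 * A^+1 + 1%:R * x^+3 - 1%:R * x^+2 * A^+1 - 1%:R * x^+2) * (x*V3 - (V2+V4)) + (1%:R * x^+5 - 1%:R * x^+3 * A^+1 - 2%:R * x^+3 + 1%:R * x^+2 * A^+1 + 1%:R * x^+2) * (x*V4 - (V3+V0)) + (1%:R * x^+5 - 1%:R * x^+3 * A^+1 - 3%:R * x^+3 + 1%:R * x^+1 * A^+1 + 1%:R * x^+1) * (x*Vp - V0) + (1%:R * x^+5 - 2%:R * x^+3 + 1%:R * x^+2) * (x*S - A*(V0+V2)) by rewrite /gL; ring.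
rewrite l0 l1 l2 l3 l4 lp lS !mulr0 !addr0 in c0.
have c1 : x * gL A x * V1 = (1%:R * x^+5 - 2%:R * x^+3 + 1%:R * x^+2) * (x*V0 - (V1+V4+Vp+S)) + (1%:R * x^+6 - 2%:R * x^+4 * A^+1 - 4%:R * x^+4 + 5%:R * x^+2 * A^+1 + 3%:R * x^+2 - 2%:R * x^+1 * A^+1 - 1%:R * A^+1) * (x*V1 - (V0+V2)) + (1%:R * x^+5 - 3%:R * x^+3 + 1%:R * x^+2 + 1%:R * x^+1) * (x*V2 - (V1+V3+S)) + (1%:R * x^+4 + 1%:R * x^+3 - 2%:R * x^+2) * (x*V3 - (V2+V4)) + (1%:R * x^+4 + 1%:R * x^+3 - 1%:R * x^+2 - 1%:R * x^+1) * (x*V4 - (V3+V0)) + (1%:R * x^+4 - 2%:R * x^+2 + 1%:R * x^+1) * (x*Vp - V0) + (2%:R * x^+4 - 5%:R * x^+2 + 2%:R * x^+1 + 1%:R) * (x*S - A*(V0+V2)) by rewrite /gL; ring.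
rewrite l0 l1 l2 l3 l4 lp lS !mulr0 !addr0 in c1.
have c2 : x * gL A x * V2 = (1%:R * x^+4 * A^+1 + 1%:R * x^+4 + 1%:R * x^+3 - 1%:R * x^+2 * A^+1 - 1%:R * x^+2) * (x*V0 - (V1+V4+Vp+S)) + (1%:R * x^+5 - 3%:R * x^+3 + 1%:R * x^+2 + 1%:R * x^+1) * (x*V1 - (V0+V2)) + (1%:R * x^+6 - 1%:R * x^+4 * A^+1 - 4%:R * x^+4 + 1%:R * x^+2 * A^+1 + 2%:R * x^+2) * (x*V2 - (V1+V3+S)) + (1%:R * x^+5 - 1%:R * x^+3 * A^+1 - 3%:R * x^+3 + 1%:R * x^+2 * A^+1 + 1%:R * x^+2) * (x*V3 - (V2+V4)) + (1%:R * x^+4 + 1%:R * x^+3 * A^+1 + 1%:R * x^+3 - 1%:R * x^+2 * A^+1 - 2%:R * x^+2) * (x*V4 - (V3+V0)) + (1%:R * x^+3 * A^+1 + 1%:R * x^+3 + 1%:R * x^+2 - 1%:R * x^+1 * A^+1 - 1%:R * x^+1) * (x*Vp - V0) + (1%:R * x^+5 - 3%:R * x^+3 + 1%:R * x^+2 + 1%:R * x^+1) * (x*S - A*(V0+V2)) by rewrite /gL; ring.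
rewrite l0 l1 l2 l3 l4 lp lS !mulr0 !addr0 in c2.
have c3 : x * gL A x * V3 = (1%:R * x^+4 + 1%:R * x^+3 * A^+1 + 1%:R * x^+3 - 1%:R * x^+2 * A^+1 - 1%:R * x^+2) * (x*V0 - (V1+V4+Vp+S)) + (1%:R * x^+4 + 1%:R * x^+3 - 2%:R * x^+2) * (x*V1 - (V0+V2)) + (1%:R * x^+5 - 1%:R * x^+3 * A^+1 - 3%:R * x^+3 + 1%:R * x^+2 * A^+1 + 1%:R * x^+2) * (x*V2 - (V1+V3+S)) + (1%:R * x^+6 - 2%:R * x^+4 * A^+1 - 4%:R * x^+4 + 2%:R * x^+2 * A^+1 + 2%:R * x^+2) * (x*V3 - (V2+V4)) + (1%:R * x^+5 - 2%:R * x^+3 * A^+1 - 3%:R * x^+3 + 1%:R * x^+2 * A^+1 + 1%:R * x^+2 + 1%:R * x^+1 * A^+1 + 1%:R * x^+1) * (x*V4 - (V3+V0)) + (1%:R * x^+3 + 1%:R * x^+2 * A^+1 + 1%:R * x^+2 - 1%:R * x^+1 * A^+1 - 1%:R * x^+1) * (x*Vp - V0) + (1%:R * x^+4 + 1%:R * x^+3 - 2%:R * x^+2) * (x*S - A*(V0+V2)) by rewrite /gL; ring.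
rewrite l0 l1 l2 l3 l4 lp lS !mulr0 !addr0 in c3.
have c4 : x * gL A x * V4 = (1%:R * x^+5 - 1%:R * x^+3 * A^+1 - 2%:R * x^+3 + 1%:R * x^+2 * A^+1 + 1%:R * x^+2) * (x*V0 - (V1+V4+Vp+S)) + (1%:R * x^+4 + 1%:R * x^+3 - 1%:R * x^+2 - 1%:R * x^+1) * (x*V1 - (V0+V2)) + (1%:R * x^+4 + 1%:R * x^+3 * A^+1 + 1%:R * x^+3 - 1%:R * x^+2 * A^+1 - 2%:R * x^+2) * (x*V2 - (V1+V3+S)) + (1%:R * x^+5 - 2%:R * x^+3 * A^+1 - 3%:R * x^+3 + 1%:R * x^+2 * A^+1 + 1%:R * x^+2 + 1%:R * x^+1 * A^+1 + 1%:R * x^+1) * (x*V3 - (V2+V4)) + (1%:R * x^+6 - 2%:R * x^+4 * A^+1 - 4%:R * x^+4 + 2%:R * x^+2 * A^+1 + 3%:R * x^+2) * (x*V4 - (V3+V0)) + (1%:R * x^+4 - 1%:R * x^+2 * A^+1 - 2%:R * x^+2 + 1%:R * x^+1 * A^+1 + 1%:R * x^+1) * (x*Vp - V0) + (1%:R * x^+4 + 1%:R * x^+3 - 1%:R * x^+2 - 1%:R * x^+1) * (x*S - A*(V0+V2)) by rewrite /gL; ring.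
rewrite l0 l1 l2 l3 l4 lp lS !mulr0 !addr0 in c4.
have c5 : x * gL A x * Vp = (1%:R * x^+5 - 1%:R * x^+3 * A^+1 - 3%:R * x^+3 + 1%:R * x^+1 * A^+1 + 1%:R * x^+1) * (x*V0 - (V1+V4+Vp+S)) + (1%:R * x^+4 - 2%:R * x^+2 + 1%:R * x^+1) * (x*V1 - (V0+V2)) + (1%:R * x^+3 * A^+1 + 1%:R * x^+3 + 1%:R * x^+2 - 1%:R * x^+1 * A^+1 - 1%:R * x^+1) * (x*V2 - (V1+V3+S)) + (1%:R * x^+3 + 1%:R * x^+2 * A^+1 + 1%:R * x^+2 - 1%:R * x^+1 * A^+1 - 1%:R * x^+1) * (x*V3 - (V2+V4)) + (1%:R * x^+4 - 1%:R * x^+2 * A^+1 - 2%:R * x^+2 + 1%:R * x^+1 * A^+1 + 1%:R * x^+1) * (x*V4 - (V3+V0)) + (1%:R * x^+6 - 2%:R * x^+4 * A^+1 - 5%:R * x^+4 + 4%:R * x^+2 * A^+1 + 5%:R * x^+2 - 2%:R * x^+1 * A^+1 - 2%:R * x^+1) * (x*Vp - V0) + (1%:R * x^+4 - 2%:R * x^+2 + 1%:R * x^+1) * (x*S - A*(V0+V2)) by rewrite /gL; ring.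
rewrite l0 l1 l2 l3 l4 lp lS !mulr0 !addr0 in c5.
have c6 : x * gL A x * S = (1%:R * x^+5 * A^+1 - 2%:R * x^+3 * A^+1 + 1%:R * x^+2 * A^+1) * (x*V0 - (V1+V4+Vp+S)) + (2%:R * x^+4 * A^+1 - 5%:R * x^+2 * A^+1 + 2%:R * x^+1 * A^+1 + 1%:R * A^+1) * (x*V1 - (V0+V2)) + (1%:R * x^+5 * A^+1 - 3%:R * x^+3 * A^+1 + 1%:R * x^+2 * A^+1 + 1%:R * x^+1 * A^+1) * (x*V2 - (V1+V3+S)) + (1%:R * x^+4 * A^+1 + 1%:R * x^+3 * A^+1 - 2%:R * x^+2 * A^+1) * (x*V3 - (V2+V4)) + (1%:R * x^+4 * A^+1 + 1%:R * x^+3 * A^+1 - 1%:R * x^+2 * A^+1 - 1%:R * x^+1 * A^+1) * (x*V4 - (V3+V0)) + (1%:R * x^+4 * A^+1 - 2%:R * x^+2 * A^+1 + 1%:R * x^+1 * A^+1) * (x*Vp - V0) + (1%:R * x^+6 - 6%:R * x^+4 + 8%:R * x^+2 - 2%:R * x^+1 - 1%:R) * (x*S - A*(V0+V2)) by rewrite /gL; ring.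
rewrite l0 l1 l2 l3 l4 lp lS !mulr0 !addr0 in c6.
have d0 : x * gL A x != 0 by rewrite mulf_neq0.
have z : forall y, x * gL A x * y = 0 -> y = 0.
  by move=> y /eqP; rewrite mulf_eq0 (negbTE d0) /= => /eqP.
by rewrite (z _ c0) (z _ c1) (z _ c2) (z _ c3) (z _ c4) (z _ c5) (z _ c6).
Qed.

Ltac evbL ha := repeat match goal with |- context [ nat_of_bool ?b ] =>
  first [ (have -> : b = true by rewrite /L_edge /= ?ha; lia)
        | (have -> : b = false by rewrite /L_edge /= ?ha; lia) ] end.

Lemma L_eig (m a : nat) (x : R) (v : 'rV[R]_(L_order m)) : (m-6)./2 = a -> 0 < x ->
  v *m L_mx R m = x *: v -> v != 0 -> gL a%:R x = 0.
Proof.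
move=> ha xpos hv hv0.
have hn : L_order m = (a + 6)%N by rewrite /L_order ha.
have E : forall j, (j < a + 6)%N ->
   \sum_(0 <= i < a + 6) nv v i * ((L_edge m i j || L_edge m j i) : nat)%:R = x * nv v j.
  move=> j hj; rewrite -hn in hj.
  have := congr1 (fun M : 'M[R]_(1, L_order m) => M 0 (Ordinal hj)) hv; rewrite colE mxE -(nvE v (Ordinal hj)) /=.
  by have -> : index_iota 0 (a + 6) = index_iota 0 (L_order m) by rewrite hn.
set S := \sum_(5 <= i < 5 + a) nv v i.
have e0 : x * nv v 0 = nv v 1 + nv v 4 + nv v (5 + a)%N + S.
  rewrite -E; last lia.
  rewrite split6 sum_b1; last by move=> i hi; rewrite /L_edge /= ha; lia.
  by evbL ha; rewrite /= /S; ring.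
have e1 : x * nv v 1 = nv v 0 + nv v 2.
  rewrite -E; last lia.
  rewrite split6 sum_b0; last by move=> i hi; rewrite /L_edge /= ha; lia.
  by evbL ha; rewrite /=; ring.
have e2 : x * nv v 2 = nv v 1 + nv v 3 + S.
  rewrite -E; last lia.
  rewrite split6 sum_b1; last by move=> i hi; rewrite /L_edge /= ha; lia.
  by evbL ha; rewrite /= /S; ring.
have e3 : x * nv v 3 = nv v 2 + nv v 4.
  rewrite -E; last lia.
  rewrite split6 sum_b0; last by move=> i hi; rewrite /L_edge /= ha; lia.
  by evbL ha; rewrite /=; ring.
have e4 : x * nv v 4 = nv v 3 + nv v 0.
  rewrite -E; last lia.
  rewrite split6 sum_b0; last by move=> i hi; rewrite /L_edge /= ha; lia.
  by evbL ha; rewrite /=; ring.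
have ep : x * nv v (5 + a)%N = nv v 0.
  rewrite -E; last lia.
  rewrite split6 sum_b0; last by move=> i hi; rewrite /L_edge /= ha; lia.
  by evbL ha; rewrite /=; ring.
have et : forall j, (5 <= j < 5 + a)%N -> x * nv v j = nv v 0 + nv v 2.
  move=> j hj; rewrite -E; last lia.
  rewrite split6 sum_b0; last by move=> i hi; rewrite /L_edge /= ha; lia.
  by evbL ha; rewrite /=; ring.
have eS : x * S = a%:R * (nv v 0 + nv v 2).
  rewrite /S mulr_sumr (eq_big_nat _ _ et) sumr_const_nat.
  have -> : (5 + a - 5 = a)%N by lia.
  by rewrite mulr_natl.
apply/eqP; apply: contraNT hv0 => hg.
have x0 : x != 0 by rewrite gt_eqF.
have [z0 [z1 [z2 [z3 [z4 [zp zS]]]]]] := L_alg x0 hg e0 e1 e2 e3 e4 ep eS.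
apply/eqP/rowP => j; rewrite mxE -nvE.
have hj : (j < a + 6)%N by rewrite -hn.
have [->|[->|[->|[->|[->|[->|ht]]]]]] : (nat_of_ord j = 0 \/ nat_of_ord j = 1 \/ nat_of_ord j = 2 \/
   nat_of_ord j = 3 \/ nat_of_ord j = 4 \/ nat_of_ord j = 5 + a \/ (5 <= j < 5 + a))%N by lia.
all: try done.
have := et _ ht; rewrite z0 z2 addr0 => /eqP; rewrite mulf_eq0 (negbTE x0) /=.
by move/eqP.
Qed.

Ltac evbY hk := repeat match goal with |- context [ nat_of_bool ?b ] =>
  first [ (have -> : b = true by rewrite /Y_edge /= ?hk; lia)
        | (have -> : b = false by rewrite /Y_edge /= ?hk; lia) ] end.

Ltac fs hK hm1 := rewrite /=; repeat (apply/andP; split); first [exact: hK | exact: hm1 | done].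

Definition fYv (K x : R) := (x^+2 - x - 1) * (x^+2 - K) - 2*K*x*(x-1).

Definition yvec (k : nat) (q tau w : R) (i : nat) : R :=
  if i == 0%N then 1 else if i == 1%N then q else if i == 2%N then q else
  if i == 3%N then 1 else if i == (4 + k)%N then w else tau.

Lemma Y_eig (m k : nat) (mu : R) : ((m-3)%/3)%N = k -> 3 < mu -> fYv k%:R mu = 0 ->
  root (char_poly (Y_mx R m)) mu.
Proof.
move=> hk mu3 hf.
set K : R := k%:R in hf *.
have K0 : 0 <= K by rewrite /K ler0n.
have hK : mu^+2 - K != 0.
  apply/negP => /eqP h.
  have hK' : K = mu^+2 by apply/eqP; rewrite eq_sym -subr_eq0 h.
  move: hf; rewrite /fYv h mulr0 sub0r hK' => /eqP; rewrite oppr_eq0 => /eqP h2.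
  have : 0 < 2 * mu ^+ 2 * mu * (mu - 1) by apply: mulr_gt0; [nra|lra].
  by rewrite h2 ltxx.
have hm1 : mu - 1 != 0 by rewrite subr_eq0; apply/negP => /eqP h; move: mu3; rewrite h; lra.
set q := 1 / (mu - 1).
set tau := 2 * mu / (mu^+2 - K).
set w := 2 * K / (mu^+2 - K).
have a0 : q + tau *+ k = mu.
  rewrite -mulr_natl -/K /q /tau.
  apply/eqP; rewrite -subr_eq0; apply/eqP.
  have -> : 1 / (mu - 1) + K * (2 * mu / (mu ^+ 2 - K)) - mu = - fYv K mu / ((mu - 1) * (mu^+2 - K)).
    by rewrite /fYv; field; fs hK hm1.
  by rewrite hf oppr0 mul0r.
have a1 : 1 + q = mu * q by rewrite /q; field; fs hK hm1.
have a2 : 1 + 1 + w = mu * tau by rewrite /w /tau; field; fs hK hm1.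
have a3 : tau *+ k = mu * w by rewrite -mulr_natl -/K /w /tau; field; fs hK hm1.
have hn : Y_order m = (k + 5)%N by rewrite /Y_order hk.
set v := \row_(j < Y_order m) yvec k q tau w j.
rewrite -eigenvalue_root_char; apply/eigenvalueP; exists v; last first.
  have h0 : (0 < Y_order m)%N by rewrite hn; lia.
  apply/negP => /eqP/rowP/(_ (Ordinal h0)); rewrite !mxE /yvec /= => /eqP.
  by rewrite oner_eq0.
apply/rowP => j; rewrite colE !mxE.
rewrite (eq_big_nat _ _ (F2 := fun i => yvec k q tau w i * ((Y_edge m i j || Y_edge m j i) : nat)%:R)); last first.
  by move=> i /andP[_ hi]; rewrite (nvE v (Ordinal hi)) /v mxE.
have -> : index_iota 0 (Y_order m) = index_iota 0 (k + 5) by rewrite hn.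
have hj : (j < k + 5)%N by rewrite -hn ltn_ord.
move: (nat_of_ord j) hj => {}j hj.
rewrite split5.
have ft : forall i, (4 <= i < 4 + k)%N -> yvec k q tau w i = tau.
  move=> i hi; rewrite /yvec.
  have -> : (i == 0%N) = false by lia.
  have -> : (i == 1%N) = false by lia.
  have -> : (i == 2%N) = false by lia.
  have -> : (i == 3%N) = false by lia.
  by have -> : (i == (4 + k)%N) = false by lia.
have fw : yvec k q tau w (4 + k)%N = w.
  rewrite /yvec.
  have -> : ((4 + k)%N == 0%N) = false by lia.
  have -> : ((4 + k)%N == 1%N) = false by lia.
  have -> : ((4 + k)%N == 2%N) = false by lia.
  have -> : ((4 + k)%N == 3%N) = false by lia.
  by rewrite eqxx.
have [->|[->|[->|[->|[->|ht]]]]] : (j = 0 \/ j = 1 \/ j = 2 \/ j = 3 \/ j = 4 + k \/ (4 <= j < 4 + k))%N by lia.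
- rewrite sum_b1; last by move=> i hi; rewrite /Y_edge /= hk; lia.
  rewrite (eq_big_nat _ _ ft) sumr_const_nat.
  have -> : (4 + k - 4 = k)%N by lia.
  by evbY hk; rewrite fw /yvec /= -a0; ring.
- rewrite sum_b0; last by move=> i hi; rewrite /Y_edge /= hk; lia.
  by evbY hk; rewrite fw /yvec /= -a1; ring.
- rewrite sum_b0; last by move=> i hi; rewrite /Y_edge /= hk; lia.
  by evbY hk; rewrite fw /yvec /= -a1; ring.
- rewrite sum_b1; last by move=> i hi; rewrite /Y_edge /= hk; lia.
  rewrite (eq_big_nat _ _ ft) sumr_const_nat.
  have -> : (4 + k - 4 = k)%N by lia.
  by evbY hk; rewrite fw /yvec /= -a0; ring.
- rewrite sum_b1; last by move=> i hi; rewrite /Y_edge /= hk; lia.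
  rewrite (eq_big_nat _ _ ft) sumr_const_nat.
  have -> : (4 + k - 4 = k)%N by lia.
  by evbY hk; rewrite fw /yvec /= -a3; ring.
- rewrite sum_b0; last by move=> i hi; rewrite /Y_edge /= hk; lia.
  by evbY hk; rewrite fw (ft _ ht) /yvec /= -a2; ring.
Qed.

Lemma gL_fY (S x : R) : gL (3*S-3) x = (x^+2 + x - 1) * fYv (2*S-1) x + (S-1)*(x^+2 - 2*x - 1).
Proof. rewrite /gL /fYv; ring. Qed.

End Gen.


Unset Implicit Arguments.
Set Strict Implicit.

Theorem lemma2p2 (R : rcfType) (m t : nat) :
  (38 <= m)%N -> ~~ odd m -> (0 < t)%N -> m = (3 * t)%N ->
  lambda (L_mx R m) < lambda (Y_mx R m).
Proof.
move=> m38 mev t0 mt.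
have tev : ~~ odd t by move: mev; rewrite mt oddM.
set s := t./2.
have ts : t = (s + s)%N by have := odd_double_half t; rewrite (negbTE tev) add0n -addnn.
have s7 : (7 <= s)%N by lia.
have ha : (m-6)./2 = (3*s-3)%N.
  by rewrite (_ : (m-6 = (3*s-3) + (3*s-3))%N) ?addnn ?doubleK //; lia.
have hk : ((m-3)%/3)%N = (2*s-1)%N by lia.
set S : R := s%:R.
have S7 : 7%:R <= S by rewrite /S ler_nat.
have hA : (3*s-3)%N%:R = 3*S - 3 :> R by rewrite natrB ?natrM //; lia.
have hK : (2*s-1)%N%:R = 2*S - 1 :> R by rewrite natrB ?natrM //; lia.
set x0 := lambda (L_mx R m).
set x1 := Num.max x0 3.
have x1ge : 3 <= x1 by rewrite /x1 le_max lexx orbT.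
have x0le : x0 <= x1 by rewrite /x1 le_max lexx.
have hf1 : fYv (2*S-1) x1 < 0.
  have [x03|x03] := leP 3 x0.
    have ex : x1 = x0 by rewrite /x1 max_l.
    rewrite ex.
    have [h0|hr] := lambda_cases (L_mx R m); first by move: x03; rewrite /x0 h0; lra.
    move: hr; rewrite -/x0 -eigenvalue_root_char => /eigenvalueP [v hv hv0].
    have := L_eig ha (lt_le_trans _ x03) hv hv0; rewrite hA gL_fY => /(_ ltac:(lra)) hg.
    have p1 : 0 < x0^+2 + x0 - 1 by nra.
    have p2 : 0 < (S-1)*(x0^+2 - 2*x0 - 1) by apply: mulr_gt0; nra.
    nra.
  have ex : x1 = 3 by rewrite /x1 max_r // ltW.
  rewrite ex /fYv expr2; move: S7; clear; lra.
set B := x1 + 3 * (2*S-1) + 3.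
have hfB : 0 < fYv (2*S-1) B.
  have Bge : 3 * (2*S-1) + 3 <= B by rewrite /B; lra.
  have K13 : 13 <= 2*S-1 by lra.
  have hu : 0 < B^+2 - B - 1 by nra.
  have ht : 3 * (2*S-1) <= B^+2 - (2*S-1) by nra.
  have h3 : (B^+2 - B - 1) * (3 * (2*S-1)) <= (B^+2 - B - 1) * (B^+2 - (2*S-1)).
    by rewrite ler_pM2l.
  have h4 : 0 < (2*S-1) * (B^+2 - B - 3) by apply: mulr_gt0; nra.
  rewrite /fYv; nra.
set P : {poly R} := ('X^2 - 'X - 1) * ('X^2 - (2*S-1)%:P) - (2*(2*S-1))%:P * 'X * ('X - 1).
have PE : forall y, P.[y] = fYv (2*S-1) y.
  by move=> y; rewrite /P /fYv !hornerE; ring.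
have hxB : x1 <= B by rewrite /B; lra.
have hneg : P.[x1] * P.[B] < 0 by rewrite !PE; nra.
have [mu hmu rmu] := poly_ivtoo hxB hneg.
move: hmu; rewrite in_itv /= => /andP[h1 h2].
have fmu : fYv (2 * s - 1)%N%:R mu = 0 by rewrite hK -PE; exact/eqP.
have rY := Y_eig hk (le_lt_trans x1ge h1) fmu.
have := lambda_ge rY.
rewrite -/x0 => hl.
exact: (le_lt_trans x0le (lt_le_trans h1 hl)).
Qed.
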